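(* Let $\mathbf p=(p_1,\dots,p_n)$ be positive integers with $p_1\ge\cdots\ge p_n$, let $c\in[0,1]$, let $g=\gcd(p_1,\dots,p_n)$, and let $P=(p_1+\cdots+p_n)/g$. For each pair $i<j$, let $T_{ij}$ be the finite word consisting of the first $(p_i+p_j)/g$ terms of the two-party sequence $S_c((p_i,p_j))$, with party labels $1,2$ replaced by $i,j$ respectively. Run the following lifting procedure for $P$ steps. At each step, find a label $k\in\{1,\dots,n\}$ that is the first remaining entry of all $n-1$ words $T_{ij}$ with $k\in\{i,j\}$. Append $k$ to an output word $w$, and delete the first entry of each of those $n-1$ words. Then: (i) at every step such a label $k$ exists and is unique; (ii) after $P$ steps all the words $T_{ij}$ are empty; (iii) the output word $w=(w_1,\dots,w_P)$ equals the first $P$ terms of $S_c(\mathbf p)$.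
   Context: Stationary divisor method with cut point $c\in[0,1]$ for a vote vector $\mathbf q=(q_1,\dots,q_m)$ with $q_1\ge\cdots\ge q_m$: seats are allocated one at a time. Initially each party $i$ has $a_i=0$ seats; each next seat goes to a party $i$ maximizing $q_i/(a_i+c)$, whose $a_i$ then increases by $1$. Ties are broken in favor of the smallest index. For $c=0$ the convention is that $q_i/0>q_j/0$ whenever $q_i>q_j$, and $q_i/0>q_j/k$ for every $k>0$. $S_c(\mathbf q)$ is the infinite sequence of indices of parties receiving successive seats. *)

(* Defs.v *)
From HB Require Import structures.
From mathcomp Require Import all_boot all_order all_algebra.
From mathcomp Require Import reals.
Set Implicit Arguments. Unset Strict Implicit. Unset Printing Implicit Defensive.
Import Order.TTheory GRing.Theory Num.Theory.

(* Parties are indexed 0 .. m-1 (paper: 1 .. m). *)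

Section Divisor.
Variable R : realType.
Local Open Scope ring_scope.

(* gt_prio c qi ai qj aj : the priority q_i/(a_i+c) is strictly larger than
   q_j/(a_j+c), with the paper's convention for zero denominators (c = 0):
   q_i/0 > q_j/0 iff q_i > q_j, and q_i/0 > q_j/k for k > 0. *)
Definition gt_prio (c : R) (qi ai qj aj : nat) : bool :=
  let di := ai%:R + c in
  let dj := aj%:R + c in
  if di == 0 then (if dj == 0 then (qj < qi)%N else true)
  else if dj == 0 then false
  else qj%:R / dj < qi%:R / di.

Definition next_seat (c : R) (q a : seq nat) : nat :=
  let m := size q in
  find (fun i => all (fun j => ~~ gt_prio c (nth 0%N q j) (nth 0%N a j)
                                             (nth 0%N q i) (nth 0%N a i))
                     (iota 0 m))
       (iota 0 m).

Fixpoint alloc (c : R) (q : seq nat) (k : nat) : seq nat :=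
  match k with
  | 0 => nseq (size q) 0%N
  | k'.+1 => let a := alloc c q k' in incr_nth a (next_seat c q a)
  end.

(* S_c(q) : the k-th term (0-based) is the party receiving seat number k+1 *)
Definition S (c : R) (q : seq nat) (k : nat) : nat := next_seat c q (alloc c q k).

Definition Tword (c : R) (p : seq nat) (g i j : nat) : seq nat :=
  let pi := nth 0%N p i in
  let pj := nth 0%N p j in
  mkseq (fun t => if S c [:: pi; pj] t == 0%N then i else j) ((pi + pj) %/ g).
End Divisor.

(* Lifting procedure.  A state is a family of words (only pairs i < j < n
   matter) together with the output word. *)
Definition words := nat -> nat -> seq nat.

Definition valid_label (n : nat) (T : words) (k : nat) : bool :=
  all (fun i => all (fun j =>
        (i < j) ==> ((k == i) || (k == j)) ==> (ohead (T i j) == Some k))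
      (iota 0 n)) (iota 0 n).

(* one step: pick a valid label (the first one; statement (i) below asserts
   it is unique), append it and delete the first entry of the relevant words *)
Definition lift_step (n : nat) (st : words * seq nat) : words * seq nat :=
  let T := st.1 in
  let k := find (valid_label n T) (iota 0 n) in
  ((fun i j => if (k == i) || (k == j) then behead (T i j) else T i j),
   rcons st.2 k).

Definition lift_state (n : nat) (T0 : words) (t : nat) : words * seq nat :=
  iter t (lift_step n) (T0, [::]).

(* Main.v *)
Require Import Defs.
From HB Require Import structures.
From mathcomp Require Import all_boot all_order all_algebra.
From mathcomp Require Import reals.
From mathcomp Require Import lra zify.
Import Order.TTheory GRing.Theory Num.Theory.
Local Open Scope ring_scope.
Local Open Scope nat_scope.

Definition K (R : realType) (B : nat) (c : R) (q a : nat) : R :=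
  if (a%:R + c == 0)%R then (B + 1 + q)%:R else (q%:R / (a%:R + c))%R.
Arguments K {R}.

Lemma d0 (R : realType) (c : R) a : (0 <= c)%R ->
  (a%:R + c == 0)%R = (a == 0)%N && (c == 0)%R.
Proof.
move=> c0; apply/idP/idP.
  move/eqP=> h; have := ler0n R a => ha.
  have hc : c = 0%R by lra.
  have ha0 : (a%:R = 0 :> R)%R by lra.
  by move/eqP: ha0; rewrite pnatr_eq0 => ->; rewrite hc eqxx.
by case/andP => /eqP -> /eqP ->; rewrite addr0.
Qed.

Lemma dpos (R : realType) (c : R) a : (0 <= c)%R ->
  ~~ ((a == 0)%N && (c == 0)%R) -> (0 < a%:R + c)%R.
Proof.
move=> c0; case: a => [|a] /=.
  by rewrite mulr0n add0r lt_def => ->.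
by move=> _; have := ltr0Sn R a; lra.
Qed.

Lemma gtK (R : realType) B (c : R) qi ai qj aj : (0 <= c)%R -> (qi <= B)%N -> (qj <= B)%N ->
  gt_prio c qi ai qj aj = (K B c qj aj < K B c qi ai)%R.
Proof.
move=> c0 hi hj; rewrite /gt_prio /K !d0 //.
case E1: ((ai == 0)%N && (c == 0)%R); case E2: ((aj == 0)%N && (c == 0)%R).
- by rewrite ltr_nat ltn_add2l.
- move/andP: E1 => [_ /eqP hc].
  rewrite ltr_pdivrMr; last by apply: dpos; rewrite ?E2.
  move/negbT: E2; rewrite hc eqxx andbT addr0 => aj0.
  rewrite -natrM ltr_nat; symmetry; apply/idP; nia.
- move/andP: E2 => [_ /eqP hc].
  rewrite ltr_pdivlMr; last by apply: dpos; rewrite ?E1.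
  move/negbT: E1; rewrite hc eqxx andbT addr0 => ai0.
  rewrite -natrM ltr_nat; symmetry; apply/idP; nia.
- by [].
Qed.
Arguments gtK {R}.
Definition tlt (R : realType) (B : nat) (c : R) (q : seq nat) (x b y b' : nat) : bool :=
  (K B c (nth 0%N q y) b' < K B c (nth 0%N q x) b)%R ||
  ((K B c (nth 0%N q x) b == K B c (nth 0%N q y) b') && (x < y)%N).
Arguments tlt {R}.


Lemma K_dec (R : realType) B (c : R) q b b' : (0 <= c)%R -> (0 < q)%N -> (q <= B)%N ->
  (b < b')%N -> (K B c q b' < K B c q b)%R.
Proof.
move=> c0 q0 qB bb; rewrite /K !d0 //.
have hb' : ~~ ((b' == 0)%N && (c == 0)%R) by case: b' bb.
rewrite (negbTE hb').
have hq : (0 < q%:R :> R)%R by rewrite ltr0n.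
have hbb : (b%:R < b'%:R :> R)%R by rewrite ltr_nat.
case E1: ((b == 0)%N && (c == 0)%R).
  move/andP: E1 => [/eqP hb /eqP hc]; subst.
  rewrite ltr_pdivrMr; last by apply: dpos.
  rewrite addr0 -natrM ltr_nat; nia.
have p1 : (0 < b'%:R + c :> R)%R by apply: dpos.
have p2 : (0 < b%:R + c :> R)%R by apply: dpos => //; apply: negbT E1.
rewrite ltr_pdivrMr // mulrAC ltr_pdivlMr //.
have := ler0n R b; nra.
Qed.

Lemma tlt_asym (R : realType) B (c : R) q x b y b' :
  tlt B c q x b y b' -> ~~ tlt B c q y b' x b.
Proof.
rewrite /tlt => /orP [h|/andP [/eqP h xy]].
  rewrite negb_or; apply/andP; split; first by rewrite -leNgt ltW.
  by rewrite (lt_eqF h).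
rewrite h ltxx /= eqxx /= -leqNgt ltnW //.
Qed.

Lemma tlt_trans (R : realType) B (c : R) q x b y b' z b'' :
  tlt B c q x b y b' -> tlt B c q y b' z b'' -> tlt B c q x b z b''.
Proof.
rewrite /tlt => /orP [h|/andP [/eqP h xy]] /orP [h'|/andP [/eqP h' yz]].
- by rewrite (lt_trans h' h).
- by rewrite -h' h.
- by rewrite h h'.
- by rewrite h h' eqxx (ltn_trans xy yz) orbT.
Qed.

Lemma tlt_mono (R : realType) B (c : R) q x b b' : (0 <= c)%R ->
  (0 < nth 0%N q x)%N -> (nth 0%N q x <= B)%N -> (b < b')%N -> tlt B c q x b x b'.
Proof. by move=> c0 q0 qB bb; rewrite /tlt K_dec. Qed.

Lemma ex_max (R : realType) (f : nat -> R) m : (0 < m)%N ->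
  exists i, (i < m)%N /\ forall j, (j < m)%N -> (f j <= f i)%R.
Proof.
elim: m => [//|m IH] _.
case: m IH => [|m] IH.
  by exists 0%N; split => // j; rewrite ltnS leqn0 => /eqP ->.
have [i [im hi]] := IH isT.
have [le|lt] := lerP (f m.+1) (f i).
  exists i; split; first by apply: ltn_trans im _.
  by move=> j; rewrite ltnS leq_eqVlt => /orP [/eqP ->|/hi].
exists m.+1; split => // j; rewrite ltnS leq_eqVlt => /orP [/eqP ->//|/hi h].
by apply: (le_trans h); apply: ltW.
Qed.

Lemma next_min (R : realType) B (c : R) q a : (0 <= c)%R ->
  (forall x, nth 0%N q x <= B)%N -> (0 < size q)%N ->
  (next_seat c q a < size q)%N /\
  forall y, (y < size q)%N -> y != next_seat c q a ->
    tlt B c q (next_seat c q a) (nth 0%N a (next_seat c q a)) y (nth 0%N a y).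
Proof.
move=> c0 hB m0.
set kv := fun i => K B c (nth 0%N q i) (nth 0%N a i).
set pr := (fun i => all (fun j => ~~ gt_prio c (nth 0%N q j) (nth 0%N a j)
                                             (nth 0%N q i) (nth 0%N a i))
                     (iota 0 (size q))).
have prE : forall i, pr i -> forall j, (j < size q)%N -> (kv j <= kv i)%R.
  move=> i /allP h j jm; have := h j; rewrite mem_iota add0n jm => /(_ isT).
  by rewrite (gtK B) // -leNgt.
have prN : forall i, ~~ pr i -> exists j, (j < size q)%N /\ (kv i < kv j)%R.
  move=> i /allPn [j]; rewrite mem_iota add0n => /andP [_ jm].
  by rewrite negbK (gtK B) // => h; exists j.
have [i [im hi]] := ex_max _ kv (size q) m0.
have hp : has pr (iota 0 (size q)).
  apply/hasP; exists i; first by rewrite mem_iota add0n.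
  apply/allP => j; rewrite mem_iota add0n => /andP [_ jm].
  by rewrite (gtK B) // -leNgt; apply: hi.
have : (find pr (iota 0 (size q)) < size q)%N by move: hp; rewrite has_find size_iota.
rewrite /next_seat -/pr => km; split => //.
set k := find pr (iota 0 (size q)) in km *.
have pk : pr k.
  by have := nth_find 0%N hp; rewrite nth_iota.
move=> y ym yk; rewrite /tlt -/(kv y) -/(kv k).
have [yk'|ky] := ltnP y k.
  have := before_find 0%N yk'; rewrite nth_iota ?(ltn_trans yk' km) // => /negbT.
  case/prN => j [jm hj].
  by have := lt_le_trans hj (prE k pk j jm) => ->.
have hle := prE k pk y ym; rewrite le_eqVlt in hle.
case/orP: hle => [/eqP ->|-> //].
by rewrite ltxx eqxx /= ltn_neqAle eq_sym yk ky.
Qed.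
Arguments next_min {R}.
Arguments tlt_mono {R}.
Arguments tlt_trans {R B c q x b y b' z b''}.
Arguments tlt_asym {R B c q x b y b'}.

Definition Dn (R : realType) (B : nat) (c : R) (q a : seq nat) : Prop :=
  forall x y b, (x < size q)%N -> (y < size q)%N -> (b < nth 0%N a x)%N ->
    tlt B c q x b y (nth 0%N a y).
Arguments Dn {R}.

Lemma sumn_incr a k : (k < size a)%N -> sumn (incr_nth a k) = (sumn a).+1.
Proof.
elim: a k => [//|x a IH] [|k] //= h.
by rewrite IH // addnS.
Qed.

Lemma sumn_le (a a' : seq nat) : size a = size a' ->
  (forall x, nth 0%N a' x <= nth 0%N a x)%N -> (sumn a' <= sumn a)%N.
Proof.
elim: a a' => [|x a IH] [|x' a'] //= [hs] h.
apply: leq_add; first by apply: (h 0%N).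
by apply: IH => // y; apply: (h y.+1).
Qed.

Lemma pointwise_eq (a a' : seq nat) : size a = size a' ->
  (forall x, nth 0%N a' x <= nth 0%N a x)%N -> sumn a' = sumn a -> a' = a.
Proof.
elim: a a' => [|x a IH] [|x' a'] //= [hs] h hsum.
have h0 := h 0%N; have hr : forall y, (nth 0%N a' y <= nth 0%N a y)%N by move=> y; apply: (h y.+1).
have hle := sumn_le a a' hs hr.
have ex : x' = x by simpl in h0; lia.
subst; congr cons; apply: IH => //; lia.
Qed.

Lemma alloc_props (R : realType) B (c : R) q t : (0 <= c)%R ->
  (forall x, nth 0%N q x <= B)%N -> (forall x, x < size q -> 0 < nth 0%N q x)%N ->
  (0 < size q)%N ->
  [/\ size (alloc c q t) = size q, sumn (alloc c q t) = t & Dn B c q (alloc c q t)].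
Proof.
move=> c0 hB hpos m0.
elim: t => [|t [hs hsum hD]] /=.
  split; first by rewrite size_nseq.
    by elim: (size q) => //.
  by move=> x y b _ _; rewrite nth_nseq; case: ifP.
have [km kmin] := next_min B c q (alloc c q t) c0 hB m0.
set k := next_seat c q (alloc c q t) in km kmin *.
set a := alloc c q t in hs hsum hD kmin *.
clearbody k a.
split; [by rewrite size_incr_nth hs km|by rewrite sumn_incr ?hs ?hsum|].
move=> x y b xm ym; rewrite !nth_incr_nth => hb.
move: hb; case: (eqVneq k y) => [eky|yk] /=.
  subst y; rewrite add1n.
  case: (eqVneq k x) => [ekx|xk] /= hb.
    subst x; rewrite add1n ltnS leq_eqVlt in hb.
    case/orP: hb => [/eqP ->|hb].
      by apply: tlt_mono => //; apply: hpos.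
    apply: tlt_trans (hD _ _ _ xm xm hb) _.
    by apply: tlt_mono => //; apply: hpos.
  rewrite add0n in hb.
  apply: tlt_trans (hD _ _ _ xm km hb) _.
  by apply: tlt_mono => //; apply: hpos.
rewrite add0n.
case: (eqVneq k x) => [ekx|xk] /= hb.
  subst x; rewrite add1n ltnS leq_eqVlt in hb.
  case/orP: hb => [/eqP ->|hb].
    by apply: kmin => //; rewrite eq_sym.
  by apply: hD.
rewrite add0n in hb.
by apply: hD.
Qed.

Lemma Dn_unique (R : realType) B (c : R) q a a' :
  size a = size q -> size a' = size q -> Dn B c q a -> Dn B c q a' ->
  sumn a = sumn a' -> a = a'.
Proof.
move=> hs hs' hD hD' hsum.
case hx: (has (fun x => nth 0%N a x < nth 0%N a' x)%N (iota 0 (size q))).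
  case/hasP: hx => x; rewrite mem_iota add0n => /andP [_ xm] hx.
  case hy: (has (fun y => nth 0%N a' y < nth 0%N a y)%N (iota 0 (size q))).
    case/hasP: hy => y; rewrite mem_iota add0n => /andP [_ ym] hy.
    have h1 := hD' _ _ _ xm ym hx.
    have h2 := hD _ _ _ ym xm hy.
    by have := tlt_asym h1; rewrite h2.
  have e : a = a'.
    apply: pointwise_eq; first by rewrite hs hs'.
    move=> y; case: (ltnP y (size q)) => ym.
      apply/negP => /negP; rewrite -ltnNge => hy'.
      by move/negP: hy; apply; apply/hasP; exists y; rewrite ?mem_iota ?add0n.
    by rewrite nth_default ?hs.
    by [].
  by rewrite e ltnn in hx.
apply/esym/pointwise_eq; first by rewrite hs hs'.
  move=> y; case: (ltnP y (size q)) => ym.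
    apply/negP => /negP; rewrite -ltnNge => hy'.
    by move/negP: hx; apply; apply/hasP; exists y; rewrite ?mem_iota ?add0n.
  by rewrite nth_default ?hs'.
by [].
Qed.

Arguments alloc_props {R}.
Arguments Dn_unique {R}.

Definition fij (i j x : nat) := if x == 0%N then i else j.

Lemma tlt_pair (R : realType) B (c : R) p i j x y b b' :
  (i < j)%N -> (x < 2)%N -> (y < 2)%N ->
  tlt B c [:: nth 0%N p i; nth 0%N p j] x b y b' = tlt B c p (fij i j x) b (fij i j y) b'.
Proof.
move=> ij; have ji : (j < i)%N = false by rewrite ltnNge ltnW.
rewrite /tlt /fij.
by case: x => [|[|//]] _; case: y => [|[|//]] _ /=; rewrite ?ltnn ?ij ?ji.
Qed.

Lemma nth_pair (a : seq nat) i j x : (x < 2)%N ->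
  nth 0%N [:: nth 0%N a i; nth 0%N a j] x = nth 0%N a (fij i j x).
Proof. by case: x => [|[|//]]. Qed.

Lemma fij_lt i j n x : (i < j < n)%N -> (x < 2)%N -> (fij i j x < n)%N.
Proof. by rewrite /fij => /andP [ij jn]; case: ifP => // _ _; apply: ltn_trans ij jn. Qed.

Lemma fij_inj i j x y : (i < j)%N -> (x < 2)%N -> (y < 2)%N -> fij i j x = fij i j y -> x = y.
Proof.
move=> ij; rewrite /fij; case: x => [|[|//]] _; case: y => [|[|//]] _ //= h;
  by move: ij; rewrite h ltnn.
Qed.

Lemma pair_alloc (R : realType) B (c : R) p i j t : (0 <= c)%R ->
  (forall x, nth 0%N p x <= B)%N -> (forall x, x < size p -> 0 < nth 0%N p x)%N ->
  (i < j < size p)%N ->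
  let a := alloc c p t in
  alloc c [:: nth 0%N p i; nth 0%N p j] (nth 0%N a i + nth 0%N a j) =
    [:: nth 0%N a i; nth 0%N a j].
Proof.
move=> c0 hB hpos hij a.
have m0 : (0 < size p)%N by case/andP: hij => _; apply: leq_ltn_trans.
have [ij jn] := andP hij.
set q2 := [:: nth 0%N p i; nth 0%N p j].
have hB2 : forall x, (nth 0%N q2 x <= B)%N by case=> [|[|x]] //=; rewrite nth_nil.
have hpos2 : forall x, (x < size q2 -> 0 < nth 0%N q2 x)%N.
  case=> [|[|//]] _ /=; apply: hpos => //; apply: ltn_trans ij jn.
have [_ _ hD] := alloc_props B c p t c0 hB hpos m0.
have [hs2 hsum2 hD2] := alloc_props B c q2 (nth 0%N a i + nth 0%N a j) c0 hB2 hpos2 isT.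
apply: (Dn_unique B c q2) => //; last by rewrite hsum2 /= addn0.
move=> x y b xm ym hb.
rewrite nth_pair // tlt_pair //; rewrite nth_pair // in hb.
by apply: hD => //; apply: fij_lt.
Qed.

Arguments pair_alloc {R}.

Lemma pair_step (R : realType) B (c : R) p i j t : (0 <= c)%R ->
  (forall x, nth 0%N p x <= B)%N -> (forall x, x < size p -> 0 < nth 0%N p x)%N ->
  (i < j < size p)%N ->
  let a := alloc c p t in
  let k := next_seat c p a in
  ((k == i) || (k == j)) ->
  S c [:: nth 0%N p i; nth 0%N p j] (nth 0%N a i + nth 0%N a j) = (if k == i then 0 else 1)%N.
Proof.
move=> c0 hB hpos hij a k hk.
have m0 : (0 < size p)%N by case/andP: hij => _; apply: leq_ltn_trans.
have [ij jn] := andP hij.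
set q2 := [:: nth 0%N p i; nth 0%N p j].
have hB2 : forall x, (nth 0%N q2 x <= B)%N by case=> [|[|x]] //=; rewrite nth_nil.
rewrite /S (pair_alloc B c p i j t c0 hB hpos hij) -/a.
have [k2m k2min] := next_min B c q2 [:: nth 0%N a i; nth 0%N a j] c0 hB2 isT.
have [km kmin] := next_min B c p a c0 hB m0.
rewrite -/k in km kmin.
set k2 := next_seat c q2 _ in k2m k2min *.
set e := (if k == i then 0 else 1)%N.
have em : (e < 2)%N by rewrite /e; case: ifP.
have fe : fij i j e = k.
  rewrite /e /fij; case: (eqVneq k i) => [-> //|ki] /=.
  by move: hk; rewrite (negbTE ki) /= => /eqP.
apply/eqP; apply/negP => /negP; rewrite eq_sym => ne.
have h1 := k2min e em (ne : e != k2).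
rewrite !nth_pair // tlt_pair // fe in h1.
have fk2 : fij i j k2 != k.
  apply/negP => /eqP h; rewrite -fe in h.
  by move/negP: ne; apply; apply/eqP; symmetry; exact: (fij_inj _ _ _ _ ij k2m em h).
have h2 := kmin _ (fij_lt _ _ _ _ hij k2m) fk2.
by have := tlt_asym h1; rewrite h2.
Qed.

Arguments pair_step {R}.

Definition prij (i j x : nat) : bool := (x == i) || (x == j).

Lemma filter_pair (R : realType) B (c : R) p i j t : (0 <= c)%R ->
  (forall x, nth 0%N p x <= B)%N -> (forall x, x < size p -> 0 < nth 0%N p x)%N ->
  (i < j < size p)%N ->
  filter (prij i j) (mkseq (S c p) t) =
  mkseq (fun s => if S c [:: nth 0%N p i; nth 0%N p j] s == 0%N then i else j)
        (nth 0%N (alloc c p t) i + nth 0%N (alloc c p t) j).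
Proof.
move=> c0 hB hpos hij.
have [ij jn] := andP hij.
have ji : (j == i) = false by apply/negbTE; rewrite neq_ltn ij orbT.
have ij' : (i == j) = false by rewrite eq_sym.
elim: t => [|t IH].
  by rewrite /= !nth_nseq !if_same.
rewrite mkseqS filter_rcons IH.
have hst := pair_step B c p i j t c0 hB hpos hij.
rewrite /= !nth_incr_nth.
rewrite /prij /= in hst *.
change (S c p t) with (next_seat c p (alloc c p t)).
move: hst; move: (next_seat c p (alloc c p t)) => k hst.
case: (eqVneq k i) hst => [->|ki] hst /=.
  rewrite ?eqxx /= in hst; rewrite ?ji ?ij' /=.
  by rewrite add1n add0n addSn mkseqS hst ?eqxx.
case: (eqVneq k j) hst => [->|kj] hst /=.
  rewrite ?ji ?eqxx ?orbT /= in hst *.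
  by rewrite add1n add0n addnS mkseqS hst ?eqxx ?orbT ?ji.
by rewrite !add0n.
Qed.

Arguments filter_pair {R}.
Arguments alloc_props {R}.

Lemma nth_le_sumn (s : seq nat) x : (nth 0%N s x <= sumn s)%N.
Proof.
elim: s x => [|y s IH] [|x] //=; first by apply: leq_addr.
by apply: leq_trans (IH x) _; apply: leq_addl.
Qed.

Lemma gcd_all (s : seq nat) : all (fun x => foldr gcdn 0%N s %| x)%N s.
Proof.
elim: s => [//|y s IH] /=; rewrite dvdn_gcdl /=.
apply/allP => x xs; apply: dvdn_trans (dvdn_gcdr _ _) _.
by move/allP: IH; apply.
Qed.

Lemma sumn_div d (s : seq nat) : all (fun x => d %| x)%N s ->
  sumn (map (fun x => x %/ d)%N s) = (sumn s %/ d)%N.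
Proof.
elim: s => [|y s IH] /=; first by rewrite div0n.
by case/andP => hy hs; rewrite IH // divnDl.
Qed.

Lemma key_sep (R : realType) B (c : R) g u v b : (0 <= c)%R -> (c <= 1)%R ->
  (0 < g)%N -> (0 < v)%N -> (b < u)%N -> (v * g <= B)%N ->
  (K B c (v * g) v < K B c (u * g) b)%R.
Proof.
move=> c0 c1 g0 v0 bu vB.
rewrite /K !d0 //.
have vn0 : (v == 0)%N = false by apply/negbTE; rewrite -lt0n.
rewrite vn0 /=.
have pv : (0 < v%:R + c :> R)%R by apply: dpos => //; rewrite vn0.
have hv : (1 <= v%:R :> R)%R by rewrite ler1n.
have hg : (1 <= g%:R :> R)%R by rewrite ler1n.
have hu : ((b%:R + 1) <= u%:R :> R)%R by rewrite natr1 ler_nat.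
have hb : (0 <= b%:R :> R)%R by rewrite ler0n.
case E: ((b == 0)%N && (c == 0)%R).
  move/andP: E => [/eqP hb0 /eqP hc]; subst.
  rewrite ltr_pdivrMr // addr0 -natrM ltr_nat; nia.
have pb : (0 < b%:R + c :> R)%R by apply: dpos => //; apply: negbT E.
rewrite ltr_pdivrMr // mulrAC ltr_pdivlMr // !natrM.
have h1 : (v%:R * (b%:R + c) < u%:R * (v%:R + c) :> R)%R by nra.
have hg0 : (0 < g%:R :> R)%R by lra.
nra.
Qed.

Lemma valid_get n (T : words) k i j : valid_label n T k -> (i < j)%N -> (j < n)%N ->
  (k == i) || (k == j) -> ohead (T i j) = Some k.
Proof.
move=> hv ij jn hk.
have in_ : (i < n)%N by apply: ltn_trans ij jn.
move/allP: hv => /(_ i); rewrite mem_iota add0n in_ => /(_ isT).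
move/allP => /(_ j); rewrite mem_iota add0n jn => /(_ isT).
by rewrite ij hk /= => /eqP.
Qed.

Arguments valid_get {n T k i j}.

Lemma valid_inv n (T : words) (w : seq nat) t : (t < size w)%N -> all (fun x => x < n)%N w ->
  (forall i j, (i < j < n)%N -> T i j = filter (prij i j) (drop t w)) ->
  forall k', (k' < n)%N -> valid_label n T k' = (k' == nth 0%N w t).
Proof.
move=> tw wn hT k' k'n.
set k := nth 0%N w t.
have kn : (k < n)%N by apply: (all_nthP 0%N wn).
have hd : drop t w = k :: drop t.+1 w by rewrite (drop_nth 0%N).
have hh : forall i j, (i < j < n)%N -> prij i j k -> ohead (T i j) = Some k.
  by move=> i j hij hk; rewrite hT // hd /= hk.
apply/idP/eqP.
  move=> hv; case: (ltngtP k' k) => [lt|gt|//].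
  - have hk : (k' == k') || (k' == k) by rewrite eqxx.
    have h := valid_get hv lt kn hk.
    have h' : ohead (T k' k) = Some k by apply: hh; rewrite ?lt ?kn // /prij eqxx orbT.
    by rewrite h' in h; case: h.
  - have hk : (k' == k) || (k' == k') by rewrite eqxx orbT.
    have h := valid_get hv gt k'n hk.
    have h' : ohead (T k k') = Some k by apply: hh; rewrite ?gt ?k'n // /prij eqxx.
    by rewrite h' in h; case: h.
move=> ->; apply/allP => i; rewrite mem_iota add0n => /andP [_ hi].
apply/allP => j; rewrite mem_iota add0n => /andP [_ hj].
apply/implyP => ij; apply/implyP => hk.
by rewrite hh ?ij ?hj.
Qed.

Lemma find_iota_unique (a : pred nat) n k : (k < n)%N ->
  (forall y, (y < n)%N -> a y = (y == k)) -> find a (iota 0 n) = k.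
Proof.
move=> kn ha.
have hk : has a (iota 0 n).
  by apply/hasP; exists k; [rewrite mem_iota | rewrite ha // eqxx].
have fl : (find a (iota 0 n) < n)%N by move: hk; rewrite has_find size_iota.
by have := nth_find 0%N hk; rewrite nth_iota // add0n ha // => /eqP.
Qed.

Arguments key_sep {R}.
Local Close Scope ring_scope.

Theorem mainTheorem16 (R : realType) (p : seq nat) (c : R) :
  (0 < size p)%N ->
  all (fun x => 0 < x)%N p ->
  sorted (fun x y => y <= x)%N p ->
  (0 <= c <= 1)%R ->
  let n := size p in
  let g := foldr gcdn 0%N p in
  let P := (sumn p %/ g)%N in
  let T0 : words := fun i j => Tword c p g i j in
  (* (i) at every step a valid label exists and is unique *)
  (forall t, (t < P)%N ->
     exists k, (k < n)%N /\ valid_label n (lift_state n T0 t).1 k /\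
       (forall k', (k' < n)%N -> valid_label n (lift_state n T0 t).1 k' -> k' = k)) /\
  (* (ii) after P steps all the words are empty *)
  (forall i j, (i < j < n)%N -> (lift_state n T0 P).1 i j = [::]) /\
  (* (iii) the output word is the first P terms of S_c(p) *)
  (lift_state n T0 P).2 = mkseq (S c p) P.
Proof.
move=> m0 hpa _ /andP [c0 c1] n g P T0.
set B := sumn p.
have hB : forall x, (nth 0%N p x <= B)%N by move=> x; apply: nth_le_sumn.
have hpos : forall x, (x < size p -> 0 < nth 0%N p x)%N by move=> x; apply: (all_nthP 0%N hpa).
have g0 : (0 < g)%N.
  rewrite /g; case: p m0 hpa {hB hpos T0 P g n B} => [//|y s] _ /= /andP [y0 _].
  by rewrite gcdn_gt0 y0.
have hdiv : forall x, (g %| nth 0%N p x)%N.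
  move=> x; case: (ltnP x (size p)) => xn.
    by apply: (all_nthP 0%N (gcd_all p)).
  by rewrite nth_default.
have hP : alloc c p P = map (fun x => x %/ g)%N p.
  have [hs hsum hD] := alloc_props B c p P c0 hB hpos m0.
  apply: (Dn_unique B c p) => //; first by rewrite size_map.
    move=> x y b xm ym; rewrite !(nth_map 0%N) // => hb.
    apply/orP; left.
    have hy0 : (0 < nth 0%N p y %/ g)%N by rewrite divn_gt0 // dvdn_leq // hpos.
    have := key_sep B c g _ _ b c0 c1 g0 hy0 hb.
    by rewrite !divnK //; apply => //; apply: hB.
  by rewrite hsum sumn_div //; exact: gcd_all.
set w := mkseq (S c p) P.
have hT : forall i j, (i < j < n)%N -> T0 i j = filter (prij i j) w.
  move=> i j hij; have [ij jn] := andP hij.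
  have in_ : (i < size p)%N by apply: ltn_trans ij jn.
  rewrite /T0 /Tword /w (filter_pair B c p i j P c0 hB hpos hij) hP.
  by rewrite !(nth_map 0%N) // divnDl.
have wn : all (fun x => x < n)%N w.
  apply/allP => x /mapP [s _ ->].
  by have [km _] := next_min B c p (alloc c p s) c0 hB m0.
have sw : size w = P by rewrite size_mkseq.
have inv : forall t, (t <= P)%N ->
    (forall i j, (i < j < n)%N -> (lift_state n T0 t).1 i j = filter (prij i j) (drop t w)) /\
    (lift_state n T0 t).2 = take t w.
  elim => [_|t IH tP].
    by split; [move=> i j hij; rewrite drop0; apply: hT | rewrite take0].
  have [IH1 IH2] := IH (ltnW tP).
  have tw : (t < size w)%N by rewrite sw.
  have hv := valid_inv n _ w t tw wn IH1.
  have kn : (nth 0%N w t < n)%N by apply: (all_nthP 0%N wn).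
  change (lift_state n T0 t.+1) with (lift_step n (lift_state n T0 t)).
  rewrite /lift_step.
  rewrite (find_iota_unique _ _ _ kn hv) /=.
  split.
    move=> i j hij; rewrite IH1 // (drop_nth 0%N) //= /prij.
    by case: ((nth 0%N w t == i) || (nth 0%N w t == j)).
  by rewrite IH2 (take_nth 0%N).
split.
  move=> t tP.
  have [IH1 _] := inv t (ltnW tP).
  have tw : (t < size w)%N by rewrite sw.
  have hv := valid_inv n _ w t tw wn IH1.
  have kn : (nth 0%N w t < n)%N by apply: (all_nthP 0%N wn).
  exists (nth 0%N w t); split => //; split; first by rewrite hv.
  by move=> k' k'n; rewrite hv // => /eqP.
have [I1 I2] := inv P (leqnn P).
split.
  by move=> i j hij; rewrite I1 // drop_oversize // sw.
by rewrite I2 take_oversize // sw.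
Qed.
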